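(* Let $n$ be a positive integer with $n > 6\log 10$, and let $\Delta > 0$. Let $q$ be the random score taking values in $\{0,1,\dots,n\}$ with $\Pr[q = i] = \frac{\binom{n}{i}\exp\left(\frac{i\epsilon}{2\Delta}\right)}{\left(1+\exp\left(\frac{\epsilon}{2\Delta}\right)\right)^n}$, and let the number of flipped labels be $n - q$. If $\epsilon \ge 2\Delta\log\frac{1+2\sqrt{(1.5\log 10)/n}}{1-2\sqrt{(1.5\log 10)/n}}$, then $\Pr[n - q \le n/2] \ge 0.999$, i.e. with probability at least $99.9\%$ the flipping rate is at most $1/2$.
   Context: This is the distribution of the Hamming-agreement score $q(D,D^* ) = n - |\{i : y_i \ne y^*_i\}|$ when an exponential mechanism with privacy budget $\epsilon$ and sensitivity $\Delta$ outputs a binary label vector $D$ for a true label vector $D^*$ of length $n$, each output $D$ having probability proportional to $\exp(q(D,D^* )\epsilon/(2\Delta))$; $n-q$ is the number of labels changed. $\log$ denotes the natural logarithm. *)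

(* Defs.v *)
From Stdlib Require Import Reals Lra Lia.
Open Scope R_scope.

Definition score_pmf (n : nat) (eps Delta : R) (i : nat) : R :=
  Binomial.C n i * exp (INR i * eps / (2 * Delta))
  / (1 + exp (eps / (2 * Delta))) ^ n.

Definition prob_flip_le_half (n : nat) (eps Delta : R) : R :=
  sum_f_R0 (fun i => if Rle_dec (INR n - INR i) (INR n / 2)
                     then score_pmf n eps Delta i else 0) n.

(* Main.v *)
Require Import Defs.
From Stdlib Require Import Reals Lra Lia Psatz.
Open Scope R_scope.

Lemma exp_INR_mul (i : nat) (a : R) : exp (INR i * a) = exp a ^ i.
Proof.
  induction i as [|i IH].
  - simpl. rewrite Rmult_0_l, exp_0; reflexivity.
  - rewrite S_INR. simpl pow. replace ((INR i + 1) * a) with (INR i * a + a) by ring.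
    rewrite exp_plus, IH; ring.
Qed.

Lemma sum_C_one (n : nat) : sum_f_R0 (fun i => Binomial.C n i) n = 2 ^ n.
Proof.
  replace 2 with (1 + 1) by ring. rewrite binomial.
  apply sum_eq; intros i _. repeat rewrite pow1; ring.
Qed.

Lemma sum_C_E (n : nat) (E : R) : sum_f_R0 (fun i => Binomial.C n i * E ^ i) n = (E + 1) ^ n.
Proof.
  rewrite binomial. apply sum_eq; intros i _. rewrite pow1; ring.
Qed.

Theorem corollary3 (n : nat) (eps Delta : R) :
  (0 < n)%nat ->
  INR n > 6 * ln 10 ->
  0 < Delta ->
  eps >= 2 * Delta *
    ln ((1 + 2 * sqrt ((3/2) * ln 10 / INR n)) /
        (1 - 2 * sqrt ((3/2) * ln 10 / INR n))) ->
  prob_flip_le_half n eps Delta >= 999/1000.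
Proof.
  intros Hn HnL HD Heps.
  set (L := ln 10) in *.
  assert (HL : 0 < L).
  { unfold L. rewrite <- ln_1. apply ln_increasing; lra. }
  assert (HnR : 0 < INR n) by (apply lt_0_INR; lia).
  set (x := (3/2) * L / INR n) in *.
  assert (Hx : 0 < x) by (unfold x; apply Rdiv_lt_0_compat; lra).
  set (t := sqrt x) in *.
  assert (Ht2 : t * t = x) by (unfold t; apply sqrt_sqrt; lra).
  assert (Ht0 : 0 <= t) by (unfold t; apply sqrt_pos).
  set (s := 2 * t) in *.
  assert (Hs2 : s * s * INR n = 6 * L).
  { unfold s. replace (2 * t * (2 * t)) with (4 * (t * t)) by ring.
    rewrite Ht2. unfold x. field. lra. }
  assert (Hs0 : 0 <= s) by (unfold s; lra).
  assert (Hs1 : s < 1).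
  { assert (s * s < 1).
    { apply (Rmult_lt_reg_r (INR n)); [lra|]. rewrite Hs2. lra. }
    nra. }
  set (E0 := (1 + s) / (1 - s)) in *.
  assert (HE0 : 1 <= E0).
  { unfold E0. apply (Rmult_le_reg_r (1 - s)); [lra|].
    field_simplify; lra. }
  set (a := eps / (2 * Delta)).
  assert (Ha : ln E0 <= a).
  { unfold a. apply (Rmult_le_reg_r (2 * Delta)); [lra|].
    field_simplify; [|lra]. lra. }
  set (E := exp a).
  assert (HE : E0 <= E).
  { unfold E. rewrite <- (exp_ln E0) by lra.
    destruct (Rle_lt_or_eq_dec _ _ Ha) as [h|h].
    - left; apply exp_increasing; exact h.
    - rewrite h; lra. }
  assert (Ha0 : 0 <= a).
  { eapply Rle_trans; [|exact Ha]. rewrite <- ln_1.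
    destruct (Rle_lt_or_eq_dec _ _ HE0) as [h|h].
    - left; apply ln_increasing; lra.
    - rewrite h; lra. }
  set (u := exp (a / 2)).
  assert (Hu2 : u * u = E).
  { unfold u, E. rewrite <- exp_plus. f_equal; field. }
  assert (Hu1 : 1 <= u).
  { unfold u. pose proof (exp_ineq1_le (a/2)). lra. }
  assert (HEpos : 0 < E) by (unfold E; apply exp_pos).
  assert (Hpmf : forall i, score_pmf n eps Delta i = Binomial.C n i * E ^ i / (1 + E) ^ n).
  { intro i. unfold score_pmf. fold a. fold E.
    replace (INR i * eps / (2 * Delta)) with (INR i * a) by (unfold a; field; lra).
    rewrite exp_INR_mul. reflexivity. }
  assert (HD1 : 0 < (1 + E) ^ n) by (apply pow_lt; lra).
  assert (Hterm : forall i, (i <= n)%nat ->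
     Binomial.C n i * E ^ i / (1 + E) ^ n - Binomial.C n i * u ^ n / (1 + E) ^ n
     <= (if Rle_dec (INR n - INR i) (INR n / 2) then score_pmf n eps Delta i else 0)).
  { intros i Hi.
    assert (HC : 0 <= Binomial.C n i).
    { unfold Binomial.C. apply Rmult_le_pos; [apply pos_INR|].
      left; apply Rinv_0_lt_compat. apply Rmult_lt_0_compat; apply INR_fact_lt_0. }
    assert (Hun : 0 <= u ^ n) by (apply pow_le; lra).
    destruct (Rle_dec (INR n - INR i) (INR n / 2)) as [h|h].
    - rewrite Hpmf. assert (0 <= Binomial.C n i * u ^ n / (1 + E) ^ n).
      { unfold Rdiv; apply Rmult_le_pos; [apply Rmult_le_pos|left; apply Rinv_0_lt_compat]; lra. }
      lra.
    - assert (H2i : (2 * i <= n)%nat).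
      { assert (INR (2 * i) < INR n) by (rewrite mult_INR; simpl; lra).
        apply INR_lt in H. lia. }
      assert (HEi : E ^ i <= u ^ n).
      { rewrite <- Hu2. rewrite Rpow_mult_distr.
        replace (u ^ i * u ^ i) with (u ^ (2 * i)) by (rewrite <- pow_add; f_equal; lia).
        apply Rle_pow; assumption. }
      assert (Binomial.C n i * E ^ i <= Binomial.C n i * u ^ n)
        by (apply Rmult_le_compat_l; assumption).
      unfold Rdiv. assert (0 < / (1 + E) ^ n) by (apply Rinv_0_lt_compat; lra).
      nra. }
  unfold prob_flip_le_half.
  eapply Rge_trans; [apply Rle_ge; apply sum_Rle; exact Hterm|].
  rewrite minus_sum.
  assert (S1 : sum_f_R0 (fun i => Binomial.C n i * E ^ i / (1 + E) ^ n) n = 1).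
  { transitivity (/ (1 + E) ^ n * sum_f_R0 (fun i => Binomial.C n i * E ^ i) n).
    - rewrite scal_sum. apply sum_eq; intros; unfold Rdiv; ring.
    - rewrite sum_C_E. rewrite Rplus_comm. apply Rinv_l. apply Rgt_not_eq. apply pow_lt. lra. }
  set (g := 2 * u / (1 + E)).
  assert (S2 : sum_f_R0 (fun i => Binomial.C n i * u ^ n / (1 + E) ^ n) n = g ^ n).
  { transitivity (u ^ n / (1 + E) ^ n * sum_f_R0 (fun i => Binomial.C n i) n).
    - rewrite scal_sum. apply sum_eq; intros; unfold Rdiv; ring.
    - rewrite sum_C_one. unfold g, Rdiv. rewrite !Rpow_mult_distr, pow_inv. ring. }
  rewrite S1, S2.
  assert (Hg0 : 0 <= g) by (unfold g; apply Rmult_le_pos; [lra|left; apply Rinv_0_lt_compat; lra]).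
  assert (Hgg : g * g <= 1 - s * s).
  { unfold g. apply (Rmult_le_reg_r ((1 + E) * (1 + E))); [nra|].
    replace (2 * u / (1 + E) * (2 * u / (1 + E)) * ((1 + E) * (1 + E))) with (4 * (u * u)) by (field; lra).
    rewrite Hu2.
    assert (HE1 : (1 - s) * E - (1 + s) >= 0).
    { unfold E0 in HE. apply Rmult_le_compat_l with (r := 1 - s) in HE; [|lra].
      replace ((1 - s) * ((1 + s) / (1 - s))) with (1 + s) in HE by (field; lra). lra. }
    assert (HE2 : (1 + s) * E - (1 - s) >= 0) by nra.
    nra. }
  assert (Hpow : (g * g) ^ n <= / 10 ^ 6).
  { eapply Rle_trans. { apply pow_incr. split; [nra|exact Hgg]. }
    apply Rle_trans with (exp (- (s * s)) ^ n).
    { apply pow_incr. split; [nra|]. pose proof (exp_ineq1_le (- (s * s))). lra. }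
    rewrite <- exp_INR_mul.
    replace (INR n * - (s * s)) with (- (INR 6 * L)) by (replace (INR 6) with 6 by (simpl; ring); rewrite <- Hs2; ring).
    rewrite exp_Ropp, exp_INR_mul. unfold L. rewrite exp_ln by lra. lra. }
  rewrite Rpow_mult_distr in Hpow.
  assert (0 <= g ^ n) by (apply pow_le; lra).
  assert (g ^ n <= 1/1000) by nra.
  lra.
Qed.
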